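(* Let $\sigma$ be a $C_0$-nice measure on $\mathbb{C}$ with $0\notin\operatorname{supp}(\sigma)$, let $z\notin\operatorname{supp}(\sigma)$ and set $d_0=\operatorname{dist}(\{0,z\},\operatorname{supp}(\sigma))$. Then $$\int_{\mathbb{C}}\Big|\frac{1}{z-\xi}+\frac1\xi\Big|\,d\sigma(\xi)\le\frac{C(C_0)|z|}{d_0},$$ where $C(C_0)$ depends only on $C_0$.
   Context: $\sigma$ is a positive Borel measure; it is $C_0$-nice if $\sigma(B(w,r))\le C_0r$ for every open disc $B(w,r)$. *)

(* Defs.v *)
From HB Require Import structures.
From mathcomp Require Import all_boot all_order all_algebra.
From mathcomp Require Import all_classical all_reals all_analysis.
From mathcomp Require Import complex.

Set Implicit Arguments.
Unset Strict Implicit.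
Unset Printing Implicit Defensive.

Import Order.TTheory GRing.Theory Num.Theory.
Local Open Scope classical_set_scope.
Local Open Scope ring_scope.

(* The complex plane is modelled, as a measurable space, by R * R with the
   product sigma-algebra (which is the Borel sigma-algebra of R^2 = C). *)
Definition toC {R : realType} (p : (R * R)%type) : R[i] := Complex p.1 p.2.

Definition cabs {R : realType} (p : (R * R)%type) : R := Normc.normc (toC p).

Definition disc {R : realType} (w : (R * R)%type) (r : R) : set (R * R)%type :=
  [set xi | Normc.normc (toC xi - toC w) < r].

Definition nice {R : realType} (C0 : R)
  (sigma : {measure set (R * R)%type -> \bar R}) : Prop :=
  forall (w : (R * R)%type) (r : R), 0 < r -> (sigma (disc w r) <= (C0 * r)%:E)%E.

(* Support of sigma: points all of whose open disc neighbourhoods have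
   positive measure (complement of the largest open null set). *)
Definition supp {R : realType}
  (sigma : {measure set (R * R)%type -> \bar R}) : set (R * R)%type :=
  [set w | forall r : R, 0 < r -> (0 < sigma (disc w r))%E].

(* dist({0, z}, S) = inf_{xi in S} min(|xi - 0|, |xi - z|), in \bar R
   (it is +oo when S is empty). *)
Definition dist0z {R : realType} (z : (R * R)%type) (S : set (R * R)%type) : \bar R :=
  ereal_inf [set (Num.min (Normc.normc (toC xi)) (Normc.normc (toC xi - toC z)))%:E
            | xi in S].

(* Main.v *)
Require Import Defs.
From HB Require Import structures.
From mathcomp Require Import all_boot all_order all_algebra.
From mathcomp Require Import all_classical all_reals all_analysis.
From mathcomp Require Import complex.
From mathcomp Require Import measurable_realfun.
From mathcomp.algebra_tactics Require Import ring lra.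
Import Order.TTheory GRing.Theory Num.Theory.
Local Open Scope classical_set_scope.
Local Open Scope ring_scope.
Set Implicit Arguments.
Unset Strict Implicit.

Section S.
Variable R : realType.
Implicit Types (w xi : (R * R)%type).

Lemma toC_sub w xi : toC xi - toC w = Complex (xi.1 - w.1) (xi.2 - w.2).
Proof. by []. Qed.

Lemma normc_sub w xi : Normc.normc (toC xi - toC w) = Num.sqrt ((xi.1 - w.1)^+2 + (xi.2 - w.2)^+2).
Proof. by []. Qed.

Lemma disc_meas w r : 0 < r -> measurable (disc w r).
Proof.
move=> r0.
have -> : disc w r = setT `&` (fun xi => (xi.1 - w.1)^+2 + (xi.2 - w.2)^+2) @^-1` `]-oo, r^+2[.
  apply/seteqP; split=> xi /=; rewrite /disc /= in_itv /=.
    move=> h; split=> //; rewrite -ltr_sqrt ?exprn_gt0// sqrtr_sqr gtr0_norm //.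
  move=> [_ h]; rewrite -(gtr0_norm r0) -sqrtr_sqr ltr_sqrt ?exprn_gt0//.
have mf : measurable_fun setT (fun xi : R * R => (xi.1 - w.1)^+2 + (xi.2 - w.2)^+2).
  apply: measurable_realfun.measurable_funD => //; apply/measurable_realfun.measurable_funX;
  apply: measurable_realfun.measurable_funB => //.
exact: mf measurableT _ (measurable_itv _).
Qed.

Lemma int_mono (mu : {measure set (R * R)%type -> \bar R}) (f g : R * R -> \bar R) :
  (forall x, (0 <= f x)%E) -> (forall x, (f x <= g x)%E) ->
  (\int[mu]_x f x <= \int[mu]_x g x)%E.
Proof.
move=> f0 fg; rewrite !ge0_integralTE //; last first.
  by move=> x; exact: le_trans (f0 x) (fg x).
apply: le_ereal_sup => _ [h hf <-]; exists h => // x; exact: le_trans (hf x) (fg x).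
Qed.

Lemma normc_lt (a b c : R) : 0 < c -> a^+2 + b^+2 < c^+2 -> Normc.normc (Complex a b) < c.
Proof.
move=> c0 h /=; rewrite -(gtr0_norm c0) -sqrtr_sqr ltr_sqrt ?exprn_gt0//.
Qed.

Lemma disc_sub w xi r s : 0 < s -> Normc.normc (toC xi - toC w) + s <= r ->
  disc w s `<=` disc xi r.
Proof.
move=> s0 h p hp'.
have hp : Normc.normc (toC p - toC w) < s := hp'.
change (Normc.normc (toC p - toC xi) < r).
have -> : toC p - toC xi = (toC p - toC w) + (toC w - toC xi) by rewrite addrA subrK.
apply: (le_lt_trans (le_normcD _ _)).
have -> : Normc.normc (toC w - toC xi) = Normc.normc (toC xi - toC w).
  by rewrite -normcN opprB.
apply: (lt_le_trans _ h); rewrite addrC ltrD2l //.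
Qed.

Lemma nsupp_negl (sigma : {measure set (R * R)%type -> \bar R}) :
  sigma.-negligible (~` supp sigma).
Proof.
pose q (B k m n : nat) : (R * R)%type :=
  (m%:R / (k.+1)%:R - B%:R, n%:R / (k.+1)%:R - B%:R).
pose rad (k : nat) : R := 2 / (k.+1)%:R.
pose F B k m n := if sigma (disc (q B k m n) (rad k)) == 0%E
  then disc (q B k m n) (rad k) else set0.
have radP k : 0 < rad k by rewrite /rad divr_gt0 // ltr0n.
have FN B k m n : sigma.-negligible (F B k m n).
  rewrite /F; case: ifP => [/eqP h|_]; last exact: negligible_set0.
  by exists (disc (q B k m n) (rad k)); split => //; exact: disc_meas.
have : sigma.-negligible (\bigcup_B \bigcup_k \bigcup_m \bigcup_n F B k m n).
  apply: negligible_bigcup => B; apply: negligible_bigcup => k.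
  apply: negligible_bigcup => m; apply: negligible_bigcup => n; exact: FN.
move=> [A [mA A0 FA]]; exists A; split => // xi nxi; apply: FA.
have [r [r0 hr]] : exists r, 0 < r /\ sigma (disc xi r) = 0%E.
  apply: contrapT => hn; apply: nxi => r r0; rewrite lt_neqAle measure_ge0 andbT.
  by apply/eqP => h; apply: hn; exists r; split.
pose B := (Num.trunc (`|xi.1| + `|xi.2|)).+1.
pose k := Num.trunc (4 / r).
pose K : R := (k.+1)%:R.
have K0 : 0 < K by rewrite ltr0n.
have Bgt : `|xi.1| + `|xi.2| < B%:R by exact: truncnS_gt.
have kgt : 4 / r < K by exact: truncnS_gt.
have x1B : 0 <= (xi.1 + B%:R) * K.
  apply: mulr_ge0; last exact: ltW.
  have := ler_norm (- xi.1); rewrite normrN; have := normr_ge0 xi.2; lra.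
have x2B : 0 <= (xi.2 + B%:R) * K.
  apply: mulr_ge0; last exact: ltW.
  have := ler_norm (- xi.2); rewrite normrN; have := normr_ge0 xi.1; lra.
pose m := Num.trunc ((xi.1 + B%:R) * K).
pose n := Num.trunc ((xi.2 + B%:R) * K).
have /andP[m1 m2] := truncn_itv x1B.
have /andP[n1 n2] := truncn_itv x2B.
have hlt : Normc.normc (toC xi - toC (q B k m n)) < rad k.
  rewrite toC_sub; apply: normc_lt => //.
  set a := xi.1 - _; set b := xi.2 - _.
  have aK : a * K = (xi.1 + B%:R) * K - m%:R.
    rewrite /a /= -/K; field; exact: lt0r_neq0.
  have bK : b * K = (xi.2 + B%:R) * K - n%:R.
    rewrite /b /= -/K; field; exact: lt0r_neq0.
  have a1 : 0 <= a * K < 1.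
    rewrite aK; apply/andP; split; first lra.
    move: m2; rewrite -natr1; lra.
  have b1 : 0 <= b * K < 1.
    rewrite bK; apply/andP; split; first lra.
    move: n2; rewrite -natr1; lra.
  rewrite /rad -/K expr_div_n ltr_pdivlMr ?exprn_gt0 //.
  move/andP: a1 => [a0 a1]; move/andP: b1 => [b0 b1].
  have : (a * K) ^+ 2 < 1 by rewrite expr2; nra.
  have : (b * K) ^+ 2 < 1 by rewrite expr2; nra.
  rewrite !exprMn; lra.
have sub : disc (q B k m n) (rad k) `<=` disc xi r.
  apply: disc_sub => //.
  have : 2 * rad k < r.
    rewrite /rad -/K; move: kgt; rewrite ltr_pdivrMr // => kgt.
    rewrite mulrA ltr_pdivrMr //; lra.
  lra.
have F0 : sigma (disc (q B k m n) (rad k)) = 0%E.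
  apply/eqP; rewrite eq_le measure_ge0 andbT -hr.
  by apply: le_measure => //; rewrite inE; apply: disc_meas.
exists B => //; exists k => //; exists m => //; exists n => //.
by rewrite /F F0 eqxx.
Qed.

Lemma shell (t del : R) : 0 < del -> del <= t ->
  exists j : nat, 2^+j * del <= t /\ t < 2^+j.+1 * del.
Proof.
move=> d0 dt.
have ex : exists j, t < 2^+j.+1 * del.
  exists (Num.trunc (t / del)); rewrite -ltr_pdivrMr //.
  apply: (lt_le_trans (truncnS_gt _)).
  rewrite -natrX ler_nat; apply: ltnW; exact: ltn_expl.
case: (ex_minnP ex) => j hj hmin; exists j; split => //.
case: j hj hmin => [|j] hj hmin; first by rewrite expr0 mul1r.
by rewrite leNgt; apply/negP => /hmin; rewrite ltnn.
Qed.

Lemma normc_ge0' (x : R[i]) : 0 <= Normc.normc x.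
Proof. by case: x => a b /=; exact: sqrtr_ge0. Qed.

Lemma ptwise (z xi : (R * R)%type) (del : R) : 0 < del ->
  del <= Normc.normc (toC xi) -> del <= Normc.normc (toC xi - toC z) ->
  exists j : nat, Normc.normc ((toC z - toC xi)^-1 + (toC xi)^-1) <=
    cabs z / (2^+j * del)^+2 *
     (\1_(disc (0, 0) (2^+j.+1 * del)) xi + \1_(disc z (2^+j.+1 * del)) xi).
Proof.
move=> d0 ha hb.
set a := Normc.normc (toC xi) in ha *; set b := Normc.normc (toC xi - toC z) in hb *.
have a0 : 0 < a := lt_le_trans d0 ha.
have b0 : 0 < b := lt_le_trans d0 hb.
have xi0 : toC xi != 0.
  by apply/eqP => h; move: a0; rewrite /a h Normc.normc0 ltxx.
have zxi0 : toC z - toC xi != 0.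
  by apply/eqP => h; move: b0; rewrite /b -opprB h oppr0 Normc.normc0 ltxx.
have -> : (toC z - toC xi)^-1 + (toC xi)^-1 = toC z * ((toC z - toC xi) * toC xi)^-1.
  by field; rewrite zxi0 xi0.
have eb : Normc.normc (toC z - toC xi) = b by rewrite /b -normcN opprB.
rewrite Normc.normcM Normc.normcV Normc.normcM eb -/a.
have cz0 : 0 <= cabs z by exact: normc_ge0'.
rewrite -/(cabs z).
have key : forall m : R, 0 < m -> m <= a -> m <= b -> cabs z * (b * a)^-1 <= cabs z / m^+2.
  move=> m m0 ma mb; apply: ler_wpM2l => //; rewrite expr2 lef_pV2 ?posrE ?mulr_gt0 //.
  by apply: ler_pM => //; exact: ltW.
have i0 : forall (A : set (R * R)%type), 0 <= \1_A xi :> R by move=> A; rewrite indicE ler0n.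
case: (leP a b) => hab.
  have [j [j1 j2]] := @shell a del d0 ha.
  exists j; apply: (le_trans (key a a0 (lexx _) hab)).
  have -> : \1_(disc (0, 0) (2^+j.+1 * del)) xi = 1 :> R.
    rewrite indicE mem_set //.
    change (Normc.normc (toC xi - 0) < 2 ^+ j.+1 * del).
    by rewrite subr0.
  rewrite -[X in X <= _]mulr1; apply: ler_pM => //.

  - by apply: divr_ge0 => //; apply: exprn_ge0; exact: ltW.
  - apply: ler_wpM2l => //; rewrite lef_pV2 ?posrE ?exprn_gt0 ?mulr_gt0 ?exprn_gt0 //.
    apply: lerXn2r => //; rewrite ?nnegrE ?mulr_ge0 ?exprn_ge0 //; exact: ltW.
  - by rewrite lerDl.
have [j [j1 j2]] := @shell b del d0 hb.
exists j; apply: (le_trans (key b b0 (ltW hab) (lexx _))).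
have -> : \1_(disc z (2^+j.+1 * del)) xi = 1 :> R.
  by rewrite indicE mem_set.
rewrite -[X in X <= _]mulr1; apply: ler_pM => //.
- by apply: divr_ge0 => //; apply: exprn_ge0; exact: ltW.
- apply: ler_wpM2l => //; rewrite lef_pV2 ?posrE ?exprn_gt0 ?mulr_gt0 ?exprn_gt0 //.
  apply: lerXn2r => //; rewrite ?nnegrE ?mulr_ge0 ?exprn_ge0 //; exact: ltW.
- by rewrite lerDr.
Qed.

Lemma nsupp_ex (sigma : {measure set (R * R)%type -> \bar R}) w :
  ~ supp sigma w -> exists r, 0 < r /\ sigma (disc w r) = 0%E.
Proof.
move=> nw; apply: contrapT => hn; apply: nw => r r0; rewrite lt_neqAle measure_ge0 andbT.
by apply/eqP => h; apply: hn; exists r; split.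
Qed.

Lemma disc_null (sigma : {measure set (R * R)%type -> \bar R}) w p r s :
  0 < r -> 0 < s -> sigma (disc w r) = 0%E -> disc p s `<=` disc w r ->
  sigma (disc p s) = 0%E.
Proof.
move=> r0 s0 h sub; apply/eqP; rewrite eq_le measure_ge0 andbT -h.
by apply: le_measure => //; rewrite inE; apply: disc_meas.
Qed.

Lemma efin_ge0 (x : R) : 0 <= x -> ((0%R : \bar R) <= x%:E)%E.
Proof. by move=> h; apply: (le_trans (lexx ((0:R)%:E))); rewrite lee_fin. Qed.

Lemma mfi (A : set (R * R)%type) (c : R) : measurable A ->
  measurable_fun [set: (R * R)%type] (fun x => (c * \1_A x)%:E).
Proof.
move=> mA; apply/measurable_EFinP; apply: measurable_funM => //.
Qed.

Lemma int_ci (mu : {measure set (R * R)%type -> \bar R}) (A : set (R * R)%type) (c : R) :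
  measurable A -> 0 <= c ->
  (\int[mu]_x (c * \1_A x)%:E = c%:E * mu A)%E.
Proof.
move=> mA c0; under eq_integral do rewrite EFinM.
rewrite ge0_integralZl //; first by rewrite integral_indic // setIT.
all: try (by apply/measurable_EFinP; exact: measurable_indic).
all: try (by move=> x _; rewrite lee_fin indicE ler0n).
all: by rewrite lee_fin.
Qed.
End S.

Theorem mainTheorem7 (R : realType) (C0 : R) :
  exists C : R,
  forall (sigma : {measure set (R * R)%type -> \bar R}) (z : (R * R)%type) (d0 : R),
    nice C0 sigma ->
    ~ supp sigma (0, 0) ->
    ~ supp sigma z ->
    dist0z z (supp sigma) = d0%:E ->
    (\int[sigma]_xi
        (Normc.normc ((toC z - toC xi)^-1 + (toC xi)^-1))%:E
      <= (C * cabs z / d0)%:E)%E.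
Proof.
exists (8 * C0) => sigma z d0 hn h0 hz hd.
have C00 : 0 <= C0.
  have := hn (0, 0) 1 ltr01; have := measure_ge0 sigma (disc (0, 0) 1).
  by move=> a b; have := le_trans a b; rewrite lee_fin mulr1.
have [r0 [r00 hr0]] := nsupp_ex h0.
have [rz [rz0 hrz]] := nsupp_ex hz.
have far p : supp sigma p -> r0 / 2 <= Normc.normc (toC p) /\ rz / 2 <= Normc.normc (toC p - toC z).
  move=> sp; split.
  - rewrite leNgt; apply/negP => hlt.
    have s0 : 0 < r0 / 2 by rewrite divr_gt0.
    have := sp _ s0; rewrite (@disc_null _ sigma (0, 0) p r0 (r0 / 2)) ?ltxx //.
    apply: disc_sub => //.
    have -> : toC (0, 0) - toC p = - toC p by rewrite sub0r.
    rewrite normcN; lra.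
  - rewrite leNgt; apply/negP => hlt.
    have s0 : 0 < rz / 2 by rewrite divr_gt0.
    have := sp _ s0; rewrite (@disc_null _ sigma z p rz (rz / 2)) ?ltxx //.
    apply: disc_sub => //.
    rewrite -normcN opprB; lra.
have dpos : 0 < d0.
  pose rho := Num.min r0 rz.
  have rho0 : 0 < rho by rewrite lt_min r00 rz0.
  have rho1 : rho <= r0 by rewrite ge_min lexx.
  have rho2 : rho <= rz by rewrite ge_min lexx orbT.
  have : ((rho / 2)%:E <= d0%:E)%E.
    rewrite -hd; apply: le_ereal_inf_tmp => _ [p sp <-]; rewrite lee_fin.
    have [f1 f2] := far p sp; rewrite le_min; apply/andP; split; lra.
  rewrite lee_fin => h; apply: lt_le_trans h; rewrite divr_gt0 //.
have near p : supp sigma p -> d0 <= Normc.normc (toC p) /\ d0 <= Normc.normc (toC p - toC z).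
  move=> sp; have : (d0%:E <= (Num.min (Normc.normc (toC p)) (Normc.normc (toC p - toC z)))%:E)%E.
    by rewrite -hd; apply: ereal_inf_lbound; exists p.
  by rewrite lee_fin le_min => /andP[].
have [N [mN N0 NN]] := nsupp_negl sigma.
pose c (j : nat) : R := cabs z / (2^+j * d0)^+2.
pose D0 (j : nat) := disc (0, 0) (2^+j.+1 * d0).
pose Dz (j : nat) := disc z (2^+j.+1 * d0).
pose h (j : nat) (x : (R * R)%type) :=
  (c j * \1_(D0 j) x + c j * \1_(Dz j) x + \1_N x)%:E.
have c0 j : 0 <= c j.
  by apply: divr_ge0; [exact: normc_ge0'|apply: exprn_ge0; rewrite mulr_ge0 ?exprn_ge0 // ltW].
have i0 (A : set (R * R)%type) x : 0 <= \1_A x :> R by rewrite indicE ler0n.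
have h0' j x : (0 <= h j x)%E.
  rewrite /h; apply: (le_trans (lexx ((0:R)%:E))); rewrite lee_fin.
  by apply: addr_ge0; [apply: addr_ge0; apply: mulr_ge0; [exact: c0|exact: i0|exact: c0|exact: i0]|exact: i0].
have rpos j : 0 < 2^+j.+1 * d0 by rewrite mulr_gt0 // exprn_gt0.
have mD0 j : measurable (D0 j) by apply: disc_meas.
have mDz j : measurable (Dz j) by apply: disc_meas.
have mh j : measurable_fun [set: (R * R)%type] (fun x => h j x).
  apply/measurable_realfun.measurable_EFinP.
  apply: measurable_realfun.measurable_funD; last exact: measurable_realfun.measurable_indic.
  by apply: measurable_realfun.measurable_funD; apply: measurable_realfun.measurable_funM => //;
    exact: measurable_realfun.measurable_indic.
have step1 : (\int[sigma]_xi (Normc.normc ((toC z - toC xi)^-1 + (toC xi)^-1))%:E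
    <= \int[sigma]_xi (\sum_(j <oo) h j xi))%E.
  apply: int_mono => [x|x]; first by rewrite lee_fin normc_ge0'.
  set v := Normc.normc _.
  case: (pselect (N x)) => Nx.
    pose n := (Num.trunc v).+1.
    apply: (@le_trans _ _ (\sum_(0 <= j < n) h j x)%E); last first.
      by apply: nneseries_lim_ge => j _ _; exact: h0' j x.
    apply: (@le_trans _ _ (\sum_(0 <= j < n) (1%:E))%E); last first.
      apply: lee_sum => j _; rewrite /h lee_fin [\1_N x]indicE mem_set // (_ : true%:R = 1 :> R) // lerDr.
      by apply: addr_ge0; apply: mulr_ge0; [exact: c0|exact: i0|exact: c0|exact: i0].
    rewrite sumEFin lee_fin big_mkord sumr_const card_ord.
    by apply: ltW; exact: truncnS_gt.
  have sx : supp sigma x.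
    by apply: contrapT => nx; apply: Nx; apply: NN.
  have [n1 n2] := near x sx.
  have [j hj] := ptwise dpos n1 n2.
  apply: (@le_trans _ _ (h j x)); last first.
    apply: (@le_trans _ _ (\sum_(0 <= i < j.+1) h i x)%E); last first.
      by apply: nneseries_lim_ge => i _ _; exact: h0' i x.
    rewrite big_nat_recr //= leeDr //; exact: sume_ge0.
  rewrite /h lee_fin; apply: (le_trans hj); rewrite mulrDr lerDl //.
rewrite (integral_nneseries sigma measurableT mh (fun n x _ => h0' n x)) in step1.
apply: (le_trans step1).
pose K := 4 * C0 * cabs z / d0.
have K0 : 0 <= K.
  by rewrite /K divr_ge0 ?mulr_ge0 ?normc_ge0' // ltW.
have step3 j : (\int[sigma]_x h j x <= (K * (2^-1)^+j)%:E)%E.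
  have -> : (\int[sigma]_x h j x = \int[sigma]_x ((c j * \1_(D0 j) x)%:E
      + (c j * \1_(Dz j) x)%:E + (\1_N x)%:E))%E.
    by apply: eq_integral => x _; rewrite /h !EFinD.
  have ge0i (A : set (R * R)%type) x : (0 <= (c j * \1_A x)%:E)%E.
    by apply: efin_ge0; apply: mulr_ge0; [exact: c0|exact: i0].
  have ge0N x : (0 <= (\1_N x : R)%:E)%E by apply: efin_ge0; exact: i0.
  rewrite ge0_integralD //; last 3 first.
  - by move=> x _; rewrite adde_ge0.
  - by apply: emeasurable_funD; exact: mfi.
  - by apply/measurable_EFinP; exact: measurable_indic.
  rewrite ge0_integralD //; try exact: mfi.
  rewrite !int_ci ?c0 // integral_indic // setIT N0 adde0.
  have hb (A : set (R * R)%type) w : A = disc w (2^+j.+1 * d0) ->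
      ((c j)%:E * sigma A <= (c j * (C0 * (2^+j.+1 * d0)))%:E)%E.
    move=> ->; rewrite [X in (_ <= X)%E]EFinM; apply: lee_pmul; [exact: efin_ge0 (c0 j)|exact: measure_ge0|by []|].
    exact: hn.
  apply: le_trans; first exact: leeD (hb _ _ erefl) (hb _ _ erefl).
  rewrite -EFinD lee_fin le_eqVlt; apply/orP; left; apply/eqP.
  rewrite /c /K exprVn [2 ^+ j.+1]exprS.
  have t0 : 2 ^+ j != 0 :> R by rewrite expf_neq0.
  have dd : d0 != 0 by rewrite gt_eqF.
  move: t0; set t := 2 ^+ j => t0.
  field; by rewrite t0 dd.
apply: (le_trans (lee_nneseries _ (fun n _ => step3 n))).
  by move=> n _ _; apply: integral_ge0 => x _; exact: h0'.
apply: lime_le.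
  by apply: is_cvg_nneseries => n _ _; rewrite lee_fin mulr_ge0 // exprn_ge0.
apply: nearW => n; rewrite sumEFin lee_fin.
have := @geometric_le_lim R n K (2^-1) K0.
rewrite invr_gt0 ltr0n ger0_norm ?invr_ge0 ?ler0n // invf_lt1 ?ltr1n // => /(_ isT isT).
rewrite /series /= => hle.
apply: (le_trans hle); rewrite le_eqVlt; apply/orP; left; apply/eqP.
have dd : d0 != 0 by rewrite gt_eqF.
rewrite /K; field; by rewrite dd.
Qed.
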